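(* Let $\alpha\neq 0$ be real. Let $S$ be a spacelike surface in $\mathbb L^3$ invariant under the rotations about the $x$-axis, parametrized by $X(x,\theta)=(x,u(x)\sinh\theta,u(x)\cosh\theta)$, $x\in I$, $\theta\in\mathbb R$, with $u>0$. If $S$ is an $\alpha$-singular maximal surface, then its generating curve $z=u(x)$ in the plane $y=0$ (identified with $\mathbb L^2$) satisfies the one-dimensional $(\alpha-1)$-singular maximal equation $$\frac{u''}{1-u'^2}=\frac{\alpha-1}{u}.$$ Conversely, if $u>0$ with $u'^2<1$ satisfies $\frac{u''}{1-u'^2}=\frac{\alpha}{u}$, then the surface $X(x,\theta)=(x,u(x)\sinh\theta,u(x)\cosh\theta)$ is an $(\alpha+1)$-singular maximal surface invariant by all rotations about the $x$-axis.
   Context: $\mathbb L^3$ is $\mathbb R^3$ with the metric $dx^2+dy^2-dz^2$. A spacelike surface has Riemannian induced metric and timelike unit normal $N$; $H$ is the trace of its second fundamental form. For $\beta\in\mathbb R$, a $\beta$-singular maximal surface is a spacelike surface in the halfspace $z>0$ with $H(p)=-\beta\frac{\langle N(p),\vec a\rangle}{z}$ for all $p$, where $\vec a=(0,0,1)$ and $N$ is a unit normal field. *)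

(* Defs.v *)
From Stdlib Require Import Reals.
From Coquelicot Require Import Coquelicot.
Open Scope R_scope.

Definition V3 := (R * R * R)%type.
Definition mkV3 (a b c : R) : V3 := (a, b, c).
Definition v1 (v : V3) : R := fst (fst v).
Definition v2 (v : V3) : R := snd (fst v).
Definition v3 (v : V3) : R := snd v.

Definition lprod (v w : V3) : R := v1 v * v1 w + v2 v * v2 w - v3 v * v3 w.

Definition avec : V3 := mkV3 0 0 1.

Definition pdx (f : R -> R -> R) (x t : R) : R := Derive (fun s => f s t) x.
Definition pdt (f : R -> R -> R) (x t : R) : R := Derive (fun s => f x s) t.

Definition c1 (X : R -> R -> V3) : R -> R -> R := fun a b => v1 (X a b).
Definition c2 (X : R -> R -> V3) : R -> R -> R := fun a b => v2 (X a b).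
Definition c3 (X : R -> R -> V3) : R -> R -> R := fun a b => v3 (X a b).

Definition Dx (X : R -> R -> V3) : R -> R -> V3 :=
  fun x t => mkV3 (pdx (c1 X) x t) (pdx (c2 X) x t) (pdx (c3 X) x t).
Definition Dt (X : R -> R -> V3) : R -> R -> V3 :=
  fun x t => mkV3 (pdt (c1 X) x t) (pdt (c2 X) x t) (pdt (c3 X) x t).

Definition twice_partial (D : R -> R -> Prop) (f : R -> R -> R) : Prop :=
  forall x t, D x t ->
    ex_derive (fun s => f s t) x /\ ex_derive (fun s => f x s) t /\
    ex_derive (fun s => pdx f s t) x /\ ex_derive (fun s => pdx f x s) t /\
    ex_derive (fun s => pdt f s t) x /\ ex_derive (fun s => pdt f x s) t.

Definition EE (X : R -> R -> V3) x t := lprod (Dx X x t) (Dx X x t).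
Definition FF (X : R -> R -> V3) x t := lprod (Dx X x t) (Dt X x t).
Definition GG (X : R -> R -> V3) x t := lprod (Dt X x t) (Dt X x t).

Definition spacelike_param (D : R -> R -> Prop) (X : R -> R -> V3) : Prop :=
  twice_partial D (c1 X) /\ twice_partial D (c2 X) /\ twice_partial D (c3 X) /\
  forall x t, D x t ->
    0 < EE X x t /\ 0 < EE X x t * GG X x t - FF X x t ^ 2.

Definition unit_normal (X : R -> R -> V3) (N : V3) (x t : R) : Prop :=
  lprod N N = -1 /\ lprod N (Dx X x t) = 0 /\ lprod N (Dt X x t) = 0.

(* Scalar second fundamental form w.r.t. the unit timelike normal N:
   sigma(v,w) = h(v,w) N with h_ij = - <X_ij, N> (since <N,N> = -1). *)
Definition h11 (X : R -> R -> V3) (N : V3) x t := - lprod (Dx (Dx X) x t) N.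
Definition h12 (X : R -> R -> V3) (N : V3) x t := - lprod (Dt (Dx X) x t) N.
Definition h22 (X : R -> R -> V3) (N : V3) x t := - lprod (Dt (Dt X) x t) N.

Definition Hmean (X : R -> R -> V3) (N : V3) x t : R :=
  (GG X x t * h11 X N x t - 2 * FF X x t * h12 X N x t + EE X x t * h22 X N x t)
  / (EE X x t * GG X x t - FF X x t ^ 2).

Definition singular_maximal (beta : R) (D : R -> R -> Prop) (X : R -> R -> V3) : Prop :=
  spacelike_param D X /\
  (forall x t, D x t -> 0 < v3 (X x t)) /\
  exists N : R -> R -> V3, forall x t, D x t ->
    unit_normal X (N x t) x t /\
    Hmean X (N x t) x t = - beta * lprod (N x t) avec / v3 (X x t).

Definition rotX (u : R -> R) : R -> R -> V3 :=
  fun x th => mkV3 x (u x * sinh th) (u x * cosh th).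

Definition rot_x (phi : R) (p : V3) : V3 :=
  mkV3 (v1 p) (v2 p * cosh phi + v3 p * sinh phi) (v2 p * sinh phi + v3 p * cosh phi).

Definition in_interval (a b : Rbar) (x : R) : Prop := Rbar_lt a x /\ Rbar_lt x b.

(* Main.v *)
Require Import Defs.
From Stdlib Require Import Reals Lra FunctionalExtensionality.
From Coquelicot Require Import Coquelicot.
Require Import Defs.
Open Scope R_scope.

Lemma Dsinh t : Derive sinh t = cosh t.
Proof. apply is_derive_unique, is_derive_Reals, derivable_pt_lim_sinh. Qed.
Lemma Dcosh t : Derive cosh t = sinh t.
Proof. apply is_derive_unique, is_derive_Reals, derivable_pt_lim_cosh. Qed.
Lemma exd_sinh t : ex_derive sinh t.
Proof. eexists; apply is_derive_Reals, derivable_pt_lim_sinh. Qed.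
Lemma exd_cosh t : ex_derive cosh t.
Proof. eexists; apply is_derive_Reals, derivable_pt_lim_cosh. Qed.

Lemma ch2sh2 t : cosh t ^ 2 - sinh t ^ 2 = 1.
Proof.
  unfold cosh, sinh. rewrite exp_Ropp. assert (exp t > 0) by apply exp_pos.
  field; lra.
Qed.
Lemma cosh_pos t : 0 < cosh t.
Proof. unfold cosh. assert (exp t > 0) by apply exp_pos. assert (exp (-t) > 0) by apply exp_pos. lra. Qed.
Lemma sinh_add a c : sinh (a + c) = sinh a * cosh c + cosh a * sinh c.
Proof. unfold cosh, sinh. rewrite !exp_Ropp, exp_plus. assert (exp a > 0) by apply exp_pos.
  assert (exp c > 0) by apply exp_pos. rewrite Rinv_mult. field; lra. Qed.
Lemma cosh_add a c : cosh (a + c) = sinh a * sinh c + cosh a * cosh c.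
Proof. unfold cosh, sinh. rewrite !exp_Ropp, exp_plus. assert (exp a > 0) by apply exp_pos.
  assert (exp c > 0) by apply exp_pos. rewrite Rinv_mult. field; lra. Qed.

Lemma DxX u : Dx (rotX u) = fun x t => mkV3 1 (Derive u x * sinh t) (Derive u x * cosh t).
Proof.
  apply functional_extensionality; intro x; apply functional_extensionality; intro t.
  unfold Dx, pdx, c1, c2, c3, rotX, mkV3, v1, v2, v3; simpl.
  rewrite Derive_scal_l, Derive_scal_l. f_equal. f_equal. apply (Derive_id x).
Qed.
Lemma DtX u : Dt (rotX u) = fun x t => mkV3 0 (u x * cosh t) (u x * sinh t).
Proof.
  apply functional_extensionality; intro x; apply functional_extensionality; intro t.
  unfold Dt, pdt, c1, c2, c3, rotX, mkV3, v1, v2, v3; simpl.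
  rewrite Derive_scal, Derive_scal, Dsinh, Dcosh, Derive_const. reflexivity.
Qed.
Lemma DxxX u : Dx (Dx (rotX u)) = fun x t => mkV3 0 (Derive (Derive u) x * sinh t) (Derive (Derive u) x * cosh t).
Proof.
  rewrite DxX.
  apply functional_extensionality; intro x; apply functional_extensionality; intro t.
  unfold Dx, pdx, c1, c2, c3, mkV3, v1, v2, v3; simpl.
  rewrite Derive_scal_l, Derive_scal_l, Derive_const. reflexivity.
Qed.
Lemma DtxX u : Dt (Dx (rotX u)) = fun x t => mkV3 0 (Derive u x * cosh t) (Derive u x * sinh t).
Proof.
  rewrite DxX.
  apply functional_extensionality; intro x; apply functional_extensionality; intro t.
  unfold Dt, pdt, c1, c2, c3, mkV3, v1, v2, v3; simpl.
  rewrite Derive_scal, Derive_scal, Dsinh, Dcosh, Derive_const. reflexivity.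
Qed.
Lemma DttX u : Dt (Dt (rotX u)) = fun x t => mkV3 0 (u x * sinh t) (u x * cosh t).
Proof.
  rewrite DtX.
  apply functional_extensionality; intro x; apply functional_extensionality; intro t.
  unfold Dt, pdt, c1, c2, c3, mkV3, v1, v2, v3; simpl.
  rewrite Derive_scal, Derive_scal, Dsinh, Dcosh, Derive_const. reflexivity.
Qed.
Lemma pdx_c1 u s t : pdx (c1 (rotX u)) s t = 1.
Proof. change (v1 (Dx (rotX u) s t) = 1). rewrite DxX. reflexivity. Qed.
Lemma pdx_c2 u s t : pdx (c2 (rotX u)) s t = Derive u s * sinh t.
Proof. change (v2 (Dx (rotX u) s t) = Derive u s * sinh t). rewrite DxX. reflexivity. Qed.
Lemma pdx_c3 u s t : pdx (c3 (rotX u)) s t = Derive u s * cosh t.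
Proof. change (v3 (Dx (rotX u) s t) = Derive u s * cosh t). rewrite DxX. reflexivity. Qed.
Lemma pdt_c1 u s t : pdt (c1 (rotX u)) s t = 0.
Proof. change (v1 (Dt (rotX u) s t) = 0). rewrite DtX. reflexivity. Qed.
Lemma pdt_c2 u s t : pdt (c2 (rotX u)) s t = u s * cosh t.
Proof. change (v2 (Dt (rotX u) s t) = u s * cosh t). rewrite DtX. reflexivity. Qed.
Lemma pdt_c3 u s t : pdt (c3 (rotX u)) s t = u s * sinh t.
Proof. change (v3 (Dt (rotX u) s t) = u s * sinh t). rewrite DtX. reflexivity. Qed.

Ltac fe := apply functional_extensionality; intro.

Lemma exd_id (x:R) : ex_derive (fun s => s) x.
Proof. auto_derive. trivial. Qed.
Lemma exd_const (c x:R) : ex_derive (fun _ => c) x.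
Proof. auto_derive. trivial. Qed.

Lemma exm (f g : R -> R) x : ex_derive f x -> ex_derive g x -> ex_derive (fun s => f s * g s) x.
Proof. apply ex_derive_mult. Qed.

Ltac exd1 := first [apply exd_sinh | apply exd_cosh | assumption | apply exd_const].
Ltac exd := apply exm; exd1.


Lemma chsh_mul t z : z * (cosh t * cosh t - sinh t * sinh t) = z.
Proof. pose proof (ch2sh2 t) as H. simpl in H. rewrite Rmult_1_r, Rmult_1_r in H. rewrite H. ring. Qed.

Lemma EE_rot u x t : EE (rotX u) x t = 1 - Derive u x ^ 2.
Proof. unfold EE, lprod. rewrite DxX. unfold mkV3, v1, v2, v3; simpl.
  pose proof (chsh_mul t (Derive u x * Derive u x)). lra. Qed.
Lemma FF_rot u x t : FF (rotX u) x t = 0.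
Proof. unfold FF, lprod. rewrite DxX, DtX. unfold mkV3, v1, v2, v3; simpl. ring. Qed.
Lemma GG_rot u x t : GG (rotX u) x t = u x ^ 2.
Proof. unfold GG, lprod. rewrite DtX. unfold mkV3, v1, v2, v3; simpl.
  pose proof (chsh_mul t (u x * u x)). lra. Qed.

Definition Nrot (u : R -> R) (k : R) x t : V3 := mkV3 (k * Derive u x) (k * sinh t) (k * cosh t).

Lemma h11_rot u k x t : h11 (rotX u) (Nrot u k x t) x t = k * Derive (Derive u) x.
Proof. unfold h11, lprod, Nrot. rewrite DxxX. unfold mkV3, v1, v2, v3; simpl.
  pose proof (chsh_mul t (k * Derive (Derive u) x)). lra. Qed.
Lemma h12_rot u k x t : h12 (rotX u) (Nrot u k x t) x t = 0.
Proof. unfold h12, lprod, Nrot. rewrite DtxX. unfold mkV3, v1, v2, v3; simpl. ring. Qed.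
Lemma h22_rot u k x t : h22 (rotX u) (Nrot u k x t) x t = k * u x.
Proof. unfold h22, lprod, Nrot. rewrite DttX. unfold mkV3, v1, v2, v3; simpl.
  pose proof (chsh_mul t (k * u x)). lra. Qed.

Theorem proposition2p4 (alpha : R) (Halpha : alpha <> 0) (a b : Rbar) (u : R -> R)
  (Hu : forall x, in_interval a b x -> ex_derive u x /\ ex_derive (Derive u) x) :
  ( (forall x, in_interval a b x -> 0 < u x) ->
    singular_maximal alpha (fun x _ => in_interval a b x) (rotX u) ->
    forall x, in_interval a b x ->
      Derive (Derive u) x / (1 - (Derive u x) ^ 2) = (alpha - 1) / u x )
  /\
  ( (forall x, in_interval a b x -> 0 < u x) ->
    (forall x, in_interval a b x -> (Derive u x) ^ 2 < 1) ->
    (forall x, in_interval a b x ->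
      Derive (Derive u) x / (1 - (Derive u x) ^ 2) = alpha / u x) ->
    singular_maximal (alpha + 1) (fun x _ => in_interval a b x) (rotX u) /\
    (forall phi x th, in_interval a b x ->
      exists x' th', in_interval a b x' /\ rotX u x' th' = rot_x phi (rotX u x th)) ).
Proof.
  split.
  - intros Hpos [Hsp [Hv3 [N HN]]] x Hx.
    destruct (HN x 0 Hx) as [[Hn1 [Hn2 Hn3]] HH].
    specialize (Hsp) as [_ [_ [_ Hsp]]]. destruct (Hsp x 0 Hx) as [HE HEG]. clear HN Hsp Hv3.
    unfold Hmean, h11, h12, h22, EE, FF, GG in *.
    unfold lprod in *.
    rewrite DxxX, DtxX, DttX, DxX, DtX in *.
    unfold rotX, avec, mkV3, v1, v2, v3 in *; simpl in *.
    rewrite sinh_0, cosh_0 in *.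
    destruct (N x 0) as [[n1 n2] n3]; simpl in *.
    set (u1 := Derive u x) in *. set (u2 := Derive (Derive u) x) in *.
    assert (Hux := Hpos x Hx). set (U := u x) in *.
    assert (n2 = 0) by nra. subst n2.
    assert (n1 = u1 * n3) by lra. subst n1.
    assert (Hd : 1 - u1^2 <> 0) by nra.
    assert (n3 <> 0) by (intro; subst; lra).
    assert (Hd' : 1 - u1 * 1 * (u1 * 1) <> 0) by nra.
    match type of HH with ?L = ?R =>
      assert (E1 : L = n3*(u2/(1-u1^2) + 1/U)) by (field; lra);
      assert (E2 : R = alpha*n3/U) by (field; lra) end.
    rewrite E1, E2 in HH.
    assert (E3 : u2/(1-u1^2) + 1/U = alpha/U).
    { apply Rmult_eq_reg_l with n3; [rewrite HH; field; lra | auto]. }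
    change (u2/(1-u1^2) = (alpha-1)/U).
    replace (u2 / (1 - u1^2)) with (alpha/U - 1/U) by lra.
    field; lra.
  - intros Hpos Hsl Heq.
    assert (P1 : pdx (c1 (rotX u)) = fun _ _ => 1) by (fe; fe; apply pdx_c1).
    assert (P2 : pdx (c2 (rotX u)) = fun s t => Derive u s * sinh t) by (fe; fe; apply pdx_c2).
    assert (P3 : pdx (c3 (rotX u)) = fun s t => Derive u s * cosh t) by (fe; fe; apply pdx_c3).
    assert (P4 : pdt (c1 (rotX u)) = fun _ _ => 0) by (fe; fe; apply pdt_c1).
    assert (P5 : pdt (c2 (rotX u)) = fun s t => u s * cosh t) by (fe; fe; apply pdt_c2).
    assert (P6 : pdt (c3 (rotX u)) = fun s t => u s * sinh t) by (fe; fe; apply pdt_c3).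
    split; [split; [|split]|].
    + split; [|split; [|split]].
      * intros x t Hx. rewrite P1, P4. cbv beta. unfold c1, rotX, mkV3, v1; simpl.
        repeat split; first [apply exd_id | apply exd_const].
      * intros x t Hx. destruct (Hu x Hx). rewrite P2, P5. cbv beta. unfold c2, rotX, mkV3, v2; simpl.
        repeat split; exd.
      * intros x t Hx. destruct (Hu x Hx). rewrite P3, P6. cbv beta. unfold c3, rotX, mkV3, v3; simpl.
        repeat split; exd.
      * intros x t Hx. rewrite EE_rot, FF_rot, GG_rot.
        pose proof (Hsl x Hx). pose proof (Hpos x Hx). split; [lra|].
        assert (0 < u x ^ 2) by (apply pow_lt; lra). nra.
    + intros x t Hx. unfold rotX, mkV3, v3; simpl. pose proof (Hpos x Hx). pose proof (cosh_pos t). nra.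
    + exists (fun x t => Nrot u (/ sqrt (1 - Derive u x ^ 2)) x t).
      intros x t Hx.
      pose proof (Hsl x Hx) as Hs. pose proof (Hpos x Hx) as Hp. pose proof (Heq x Hx) as He.
      assert (Hq : 0 < sqrt (1 - Derive u x ^ 2)) by (apply sqrt_lt_R0; lra).
      assert (Hqq : sqrt (1 - Derive u x ^ 2) * sqrt (1 - Derive u x ^ 2) = 1 - Derive u x ^ 2)
        by (apply sqrt_sqrt; lra).
      set (q := sqrt (1 - Derive u x ^ 2)) in *.
      set (k := / q).
      assert (Hk : k * k * (1 - Derive u x ^ 2) = 1) by (unfold k; rewrite <- Hqq; field; lra).
      split.
      * unfold unit_normal, lprod, Nrot. rewrite DxX, DtX. unfold mkV3, v1, v2, v3; simpl.
        pose proof (chsh_mul t (k * k)). pose proof (chsh_mul t (k * Derive u x)). simpl in Hk.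
        repeat split; [lra|lra|ring].
      * unfold Hmean. rewrite EE_rot, FF_rot, GG_rot, h11_rot, h12_rot, h22_rot.
        unfold lprod, Nrot, avec, rotX, mkV3, v1, v2, v3; simpl.
        pose proof (cosh_pos t).
        assert (Hu2 : Derive (Derive u) x = Derive (Derive u) x / (1 - Derive u x ^ 2) * (1 - Derive u x ^ 2)) by (field; lra).
        rewrite He in Hu2.
        rewrite Hu2. field. simpl in Hs. repeat split; lra.
  - intros phi x th Hx. exists x, (th + phi). split; [exact Hx|].
    unfold rotX, rot_x, mkV3, v1, v2, v3; simpl.
    rewrite sinh_add, cosh_add. f_equal; [f_equal|]; ring.
Qed.
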